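(* Consider the Bregman proximal augmented Lagrangian method described in the context with $\psi=\frac12\|\cdot\|^2$, $\phi$ Legendre and $0\le\rho_k\le\rho<1$. Let $(x^\star,y^\star)\in\operatorname{zer}T$ with $y^\star\in\operatorname{dom}\phi$ (so $y^\star\in\operatorname{argmin}F^*(0,\cdot)$), and assume that $\{y^{k+1}\}_{k\ge0}$ is bounded (which holds, e.g., if $D_\phi(y^\star,\cdot)$ is coercive). Then $F^*(v^k,y^{k+1})\to F^*(0,y^\star)$, and every limit point $y^\infty$ of $\{y^{k+1}\}_{k\ge0}$ is a dual solution, i.e. $y^\infty\in\operatorname{argmin}F^*(0,\cdot)$.
   Context: Let $f\in\Gamma_0(\mathbb{R}^n)$, $g\in\Gamma_0(\mathbb{R}^m)$ (proper lsc convex), $A\in\mathbb{R}^{m\times n}$, $b\in\mathbb{R}^m$, $\mathcal{A}(x)=Ax-b$. $L(x,y)=f(x)+\langle\mathcal{A}(x),y\rangle-g^*(y)$; KKT operator $T(x,y)=(\partial f(x)+A^\top y)\times(\partial g^*(y)+b-Ax)$ (maximal monotone), $\operatorname{zer}T=T^{-1}(0)$. The dual perturbation function is $F^*(v,y)=\sup_x\{\langle x,v\rangle-L(x,y)\}=f^*(v-A^\top y)+\langle b,y\rangle+g^*(y)$. A function $h\in\Gamma_0$ is Legendre if essentially smooth ($\operatorname{int}\operatorname{dom}h\ne\emptyset$, differentiable there, $\|\nabla h(z^\nu)\|\to\infty$ whenever $\operatorname{int}\operatorname{dom}h\ni z^\nu\to z\in\operatorname{bdry}\operatorname{dom}h$)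 and essentially strictly convex (strictly convex on every convex subset of $\operatorname{dom}\partial h$); $\nabla h^*$ is the inverse of $\nabla h$ on interiors of domains. $D_h(a,c)=h(a)-h(c)-\langle\nabla h(c),a-c\rangle$ for $a\in\operatorname{dom}h$, $c\in\operatorname{int}\operatorname{dom}h$, $+\infty$ otherwise. Let $\psi\in\Gamma_0(\mathbb{R}^n)$, $\phi\in\Gamma_0(\mathbb{R}^m)$ be Legendre, $\Phi(x,y)=\psi(x)+\phi(y)$, and assume $\operatorname{int}\operatorname{dom}\Phi\cap\operatorname{dom}T\ne\emptyset$. Bregman proximal augmented Lagrangian method: given $x^0\in\operatorname{int}\operatorname{dom}\psi$, $y^0\in\operatorname{int}\operatorname{dom}\phi$, step sizes $\sigma_k\ge\sigma>0$ and $\rho_k\in[0,1)$, it generates $s^k\in\operatorname{dom}\psi$, $x^{k+1},y^{k+1},v^k,u^k$ with $(v^k,u^k)\in T(s^k,y^{k+1})$, $x^{k+1}=\nabla\psi^*(\nabla\psi(x^k)-\sigma_kv^k)\in\operatorname{int}\operatorname{dom}\psi$, $y^{k+1}=\nabla\phi^*(\nabla\phi(y^k)-\sigma_ku^k)\in\operatorname{int}\operatorname{dom}\phi$, and $D_\psi(s^k,x^{k+1})\le\rho_k\big(D_\psi(s^k,x^k)+D_\phi(y^{k+1},y^k)\big)$. A function is coercive if it tends to $+\infty$ as the norm of its argument tends to $\infty$. *)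

(* Defs.v *)
From HB Require Import structures.
From mathcomp Require Import all_boot all_order all_algebra.
From mathcomp Require Import all_classical all_reals all_analysis.
Set Implicit Arguments. Unset Strict Implicit. Unset Printing Implicit Defensive.
Import Order.TTheory GRing.Theory Num.Theory.
Import numFieldNormedType.Exports.
Local Open Scope classical_set_scope.
Local Open Scope ring_scope.

Section Defs.
Variable R : realType.

Definition dot {n : nat} (u v : 'rV[R]_n) : R := \sum_(i < n) u 0 i * v 0 i.
Definition enorm {n : nat} (u : 'rV[R]_n) : R := Num.sqrt (dot u u).

Definition edom {T : Type} (h : T -> \bar R) : set T := [set x | (h x < +oo)%E].

Definition proper_fun {T : Type} (h : T -> \bar R) : Prop :=
  (forall x, h x != -oo%E) /\ exists x, h x \is a fin_num.

Definition convex_fun {n : nat} (h : 'rV[R]_n -> \bar R) : Prop :=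
  forall (x y : 'rV[R]_n) (t : R), 0 < t < 1 ->
    (h (t *: x + (1 - t) *: y)%R <= t%:E * h x + (1 - t)%R%:E * h y)%E.

Definition Gamma0 {n : nat} (h : 'rV[R]_n -> \bar R) : Prop :=
  proper_fun h /\ lower_semicontinuous h /\ convex_fun h.

Definition conj {n : nat} (h : 'rV[R]_n -> \bar R) (v : 'rV[R]_n) : \bar R :=
  ereal_sup [set ((dot x v)%:E - h x)%E | x in [set: 'rV[R]_n]].

Definition subdiff {n : nat} (h : 'rV[R]_n -> \bar R) (x : 'rV[R]_n) : set 'rV[R]_n :=
  [set w | h x \is a fin_num /\
           forall z, (h x + (dot w (z - x))%:E <= h z)%E].

Definition dom_subdiff {n : nat} (h : 'rV[R]_n -> \bar R) : set 'rV[R]_n :=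
  [set x | exists w, subdiff h x w].

Definition evec {n : nat} (i : 'I_n) : 'rV[R]_n := \row_j (i == j)%:R.

Definition grad {n : nat} (h : 'rV[R]_n -> \bar R) (z : 'rV[R]_n) : 'rV[R]_n :=
  \row_i ('D_(evec i) (fine \o h) z).

Definition convex_set_ {n : nat} (C : set 'rV[R]_n) : Prop :=
  forall x y (t : R), C x -> C y -> 0 <= t <= 1 -> C (t *: x + (1 - t) *: y).

Definition essentially_smooth {n : nat} (h : 'rV[R]_n -> \bar R) : Prop :=
  (interior (edom h) !=set0) /\
  (forall z, interior (edom h) z -> differentiable (fine \o h) z) /\
  (forall (zs : nat -> 'rV[R]_n) (z : 'rV[R]_n),
      (forall k, interior (edom h) (zs k)) ->
      zs @ \oo --> z ->
      (closure (edom h) `\` interior (edom h)) z ->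
      forall M : R, exists N, forall k, (N <= k)%N -> M < enorm (grad h (zs k))).

Definition essentially_strictly_convex {n : nat} (h : 'rV[R]_n -> \bar R) : Prop :=
  forall C : set 'rV[R]_n, convex_set_ C -> C `<=` dom_subdiff h ->
    forall x y (t : R), C x -> C y -> x != y -> 0 < t < 1 ->
      (h (t *: x + (1 - t) *: y)%R < t%:E * h x + (1 - t)%R%:E * h y)%E.

Definition Legendre {n : nat} (h : 'rV[R]_n -> \bar R) : Prop :=
  Gamma0 h /\ essentially_smooth h /\ essentially_strictly_convex h.

Definition Breg {n : nat} (h : 'rV[R]_n -> \bar R) (a c : 'rV[R]_n) : \bar R :=
  if `[< edom h a /\ interior (edom h) c >]
  then (h a - h c - (dot (grad h c) (a - c))%:E)%E
  else +oo%E.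

(* KKT operator: (v,u) \in T(x,y) *)
Definition KKT {n m : nat} (f : 'rV[R]_n -> \bar R) (g : 'rV[R]_m -> \bar R)
  (A : 'M[R]_(m, n)) (b : 'rV[R]_m) (x : 'rV[R]_n) (y : 'rV[R]_m)
  (vu : 'rV[R]_n * 'rV[R]_m) : Prop :=
  (exists2 a, subdiff f x a & vu.1 = a + y *m A) /\
  (exists2 c, subdiff (conj g) y c & vu.2 = c + b - x *m A^T).

Definition Fstar {n m : nat} (f : 'rV[R]_n -> \bar R) (g : 'rV[R]_m -> \bar R)
  (A : 'M[R]_(m, n)) (b : 'rV[R]_m) (v : 'rV[R]_n) (y : 'rV[R]_m) : \bar R :=
  (conj f (v - y *m A) + (dot b y)%:E + conj g y)%E.

Definition halfsq {n : nat} (x : 'rV[R]_n) : \bar R := (2^-1 * dot x x)%:E.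

(* Bregman proximal ALM iteration relations (nabla h^* = inverse of nabla h) *)
Definition BPALM {n m : nat} (f : 'rV[R]_n -> \bar R) (g : 'rV[R]_m -> \bar R)
  (A : 'M[R]_(m, n)) (b : 'rV[R]_m)
  (psi : 'rV[R]_n -> \bar R) (phi : 'rV[R]_m -> \bar R)
  (sigma rho : nat -> R)
  (s x v : nat -> 'rV[R]_n) (y u : nat -> 'rV[R]_m) : Prop :=
  interior (edom psi) (x 0%N) /\ interior (edom phi) (y 0%N) /\
  forall k : nat,
    edom psi (s k) /\
    KKT f g A b (s k) (y k.+1) (v k, u k) /\
    interior (edom psi) (x k.+1) /\
    grad psi (x k.+1) = grad psi (x k) - sigma k *: v k /\
    interior (edom phi) (y k.+1) /\
    grad phi (y k.+1) = grad phi (y k) - sigma k *: u k /\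
    (Breg psi (s k) (x k.+1) <=
       (rho k)%:E * (Breg psi (s k) (x k) + Breg phi (y k.+1) (y k)))%E.

End Defs.

(* Main.v *)
Require Import Defs.
From HB Require Import structures.
From mathcomp Require Import all_boot all_order all_algebra.
From mathcomp Require Import all_classical all_reals all_analysis.
From mathcomp Require Import ring lra.
Import Order.TTheory GRing.Theory Num.Theory.
Import numFieldNormedType.Exports.
Local Open Scope classical_set_scope.
Local Open Scope ring_scope.

Set Implicit Arguments. Unset Strict Implicit.


Section DotLemmas.
Variable R : realType.
Variable n : nat.
Implicit Types u w z : 'rV[R]_n.

Lemma dotC u w : dot u w = dot w u.
Proof. by apply: eq_bigr => i _; rewrite mulrC. Qed.
Lemma dotDl u w z : dot (u + w) z = dot u z + dot w z.
Proof. by rewrite /dot -big_split; apply: eq_bigr => i _; rewrite mxE mulrDl. Qed.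
Lemma dotDr u w z : dot z (u + w) = dot z u + dot z w.
Proof. by rewrite dotC dotDl !(dotC z). Qed.
Lemma dotNl u w : dot (- u) w = - dot u w.
Proof. by rewrite /dot -sumrN; apply: eq_bigr => i _; rewrite mxE mulNr. Qed.
Lemma dotNr u w : dot w (- u) = - dot w u.
Proof. by rewrite dotC dotNl dotC. Qed.
Lemma dotBl u w z : dot (u - w) z = dot u z - dot w z.
Proof. by rewrite dotDl dotNl. Qed.
Lemma dotBr u w z : dot z (u - w) = dot z u - dot z w.
Proof. by rewrite dotDr dotNr. Qed.
Lemma dotZl (a : R) u w : dot (a *: u) w = a * dot u w.
Proof. by rewrite /dot mulr_sumr; apply: eq_bigr => i _; rewrite mxE mulrA. Qed.
Lemma dotZr (a : R) u w : dot w (a *: u) = a * dot w u.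
Proof. by rewrite dotC dotZl dotC. Qed.
Lemma dot0l u : dot 0 u = 0.
Proof. by rewrite /dot big1 // => i _; rewrite mxE mul0r. Qed.
Lemma dot0r u : dot u 0 = 0.
Proof. by rewrite dotC dot0l. Qed.
Lemma dot_ge0 u : 0 <= dot u u.
Proof. by rewrite /dot sumr_ge0 // => i _; rewrite -expr2 sqr_ge0. Qed.
Lemma dot_entry u (i : 'I_n) : u 0 i ^+ 2 <= dot u u.
Proof.
rewrite /dot (bigD1 i) //= -expr2 lerDl; apply: sumr_ge0 => j _; by rewrite -expr2 sqr_ge0.
Qed.

Lemma dot_CS u w : dot u w ^+ 2 <= dot u u * dot w w.
Proof.
have key : forall t : R, 2 * t * dot u w <= t ^+ 2 * dot u u + dot w w.
  move=> t; have := dot_ge0 (t *: u - w).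
  rewrite !(dotBl, dotBr, dotZl, dotZr) (dotC w u); lra.
have [a0|] := eqVneq (dot u u) 0.
  have : dot u w = 0.
    apply/eqP; apply/negP => h.
    have := key ((dot w w + 1) / (2 * dot u w)).
    have -> : 2 * ((dot w w + 1) / (2 * dot u w)) * dot u w = dot w w + 1.
      by field; apply/negP.
    rewrite a0 mulr0 add0r; lra.
  by move=> ->; rewrite a0 expr0n /= mul0r.
move=> a0; have apos : 0 < dot u u by rewrite lt_def a0 dot_ge0.
have := key (dot u w / dot u u).
set c := dot u w; set a := dot u u; set d := dot w w => h.
have e1 : 2 * (c / a) * c = 2 * (c ^+ 2) / a by rewrite /=; field; rewrite gt_eqF.
have e2 : (c / a) ^+ 2 * a = c ^+ 2 / a by field; rewrite gt_eqF.
rewrite e1 e2 in h.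
have : c ^+ 2 / a <= d by lra.
by rewrite ler_pdivrMr // mulrC.
Qed.

End DotLemmas.

Section DotMx.
Variable R : realType.
Lemma dot_mulmx n m (xx : 'rV[R]_n) (yy : 'rV[R]_m) (A : 'M[R]_(m, n)) :
  dot xx (yy *m A) = dot (xx *m A^T) yy.
Proof.
rewrite /dot; under eq_bigr do rewrite mxE big_distrr /=.
rewrite exchange_big /=; apply: eq_bigr => j _; rewrite mxE big_distrl /=.
by apply: eq_bigr => i _; rewrite mxE; ring.
Qed.
End DotMx.



Section Half.
Variable R : realType.
Variable n : nat.

Lemma dot_evec (i : 'I_n) (z : 'rV[R]_n) : dot (evec R i) z = z 0 i.
Proof.
rewrite /dot (bigD1 i) //= big1 ?addr0; first by rewrite mxE eqxx mul1r.
by move=> j ji; rewrite mxE eq_sym (negbTE ji) mul0r.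
Qed.

Lemma grad_halfsq (z : 'rV[R]_n) : grad (@halfsq R n) z = z.
Proof.
apply/rowP => i; rewrite mxE /derive /=.
apply: cvg_lim => //.
apply: (@cvg_trans _ ((fun h : R => h / 2 + z 0 i) @ 0^')).
  apply: near_eq_cvg; near=> h.
  rewrite /halfsq /= !(dotDl, dotDr, dotZl, dotZr) !dot_evec (@dotC R n z (evec R i)) dot_evec.
  rewrite mxE eqxx /= mulr1 /GRing.scale /=.
  have hn0 : h != 0 by near: h; exact: nbhs_dnbhs_neq.
  by field.
have H : (fun h : R => h / 2 + z 0 i) @ (nbhs (0:R)) --> (0 / 2 + z 0 i).
  apply: cvgD; last exact: cvg_cst.
  apply: cvgMl; exact: cvg_id.
rewrite mul0r add0r in H.
exact: (@cvg_within_filter _ _ _ (nbhs (0:R))).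
Unshelve. all: by end_near.
Qed.

End Half.



Section GradIneq.
Variable R : realType.
Variable n : nat.
Implicit Types h : 'rV[R]_n -> \bar R.

Lemma row_evec (d : 'rV[R]_n) : d = \sum_(j < n) d 0 j *: evec R j.
Proof.
apply/rowP => k; rewrite summxE (bigD1 k) //= big1 ?addr0.
  by rewrite !mxE eqxx mulr1.
by move=> j jk; rewrite !mxE (negbTE jk) mulr0.
Qed.

Lemma derive_grad h c d : differentiable (fine \o h) c ->
  'D_d (fine \o h) c = dot (grad h c) d.
Proof.
move=> dif; rewrite deriveE //.
rewrite {1}(row_evec d) linear_sum /dot; apply: eq_bigr => j _.
rewrite linearZ /= mxE -deriveE // mulrC.
by [].
Qed.

Lemma fin_edom h z : proper_fun h -> edom h z -> h z \is a fin_num.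
Proof.
case=> hN _ hz; by rewrite fin_numE hN andTb (lt_eqF hz).
Qed.
Arguments fin_edom [h z].

Lemma grad_ineq h a c : proper_fun h -> convex_fun h ->
  differentiable (fine \o h) c -> edom h c -> edom h a ->
  fine (h c) + dot (grad h c) (a - c) <= fine (h a).
Proof.
move=> hp hc dif ec ea.
have fa := fin_edom hp ea; have fc := fin_edom hp ec.
rewrite -derive_grad //.
set q := fun t : R => t^-1 *: ((fine \o h \o shift c) (t *: (a - c)) - (fine \o h) c).
have cq : q @ 0^' --> 'D_(a - c) (fine \o h) c by exact: diff_derivable.
have cq' : q @ 0^'+ --> 'D_(a - c) (fine \o h) c.
  apply: cvg_trans cq; apply: cvg_app; apply: within_subset => t /= t0.
  by rewrite gt_eqF.
have -> : 'D_(a - c) (fine \o h) c = lim (q @ 0^'+) by rewrite (cvg_lim _ cq').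
suff : lim (q @ 0^'+) <= fine (h a) - fine (h c) by lra.
apply: limr_le; first by apply/cvg_ex; eexists; exact: cq'.
near=> t.
have t0 : 0 < t by near: t; exact: nbhs_right_gt.
have t1 : t < 1 by near: t; exact: nbhs_right_lt.
have P : t *: (a - c) + c = t *: a + (1 - t) *: c.
  by apply/rowP => i; rewrite !mxE; ring.
have hc' := hc a c t.
have : 0 < t < 1 by rewrite t0 t1.
move/hc'; rewrite -P -(fineK fa) -(fineK fc) -!EFinM -EFinD => H0.
have hN : h (t *: (a - c) + c) != -oo%E by case: hp.
have E : fine (h (t *: (a - c) + c)) <= t * fine (h a) + (1 - t) * fine (h c).
  move: hN H0; case: (h (t *: (a - c) + c)) => [r| |] //= _; by rewrite ?lee_fin.
move: E; rewrite /q /= /GRing.scale /= => E.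
rewrite ler_pdivrMl //; lra.
Unshelve. all: by end_near.
Qed.

End GradIneq.



Section Conj.
Variable R : realType.
Variable n : nat.
Implicit Types h : 'rV[R]_n -> \bar R.

Lemma conj_ge h w z : ((dot z w)%:E - h z <= conj h w)%E.
Proof. by apply: ereal_sup_ubound; exists z. Qed.

Lemma subdiff_le h xx a z : subdiff h xx a -> h z \is a fin_num ->
  fine (h xx) + dot a (z - xx) <= fine (h z).
Proof.
case=> fx /(_ z); rewrite -(fineK fx) => H fz; move: H; rewrite -(fineK fz) -EFinD.
by rewrite lee_fin.
Qed.

Lemma conj_subdiff h xx a : subdiff h xx a ->
  conj h a = ((dot xx a)%:E - h xx)%E.
Proof.
move=> sd; apply/eqP; rewrite eq_le conj_ge andbT.
apply: ge_ereal_sup => _ [z _ <-].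
have [fx H] := sd.
move: (H z); rewrite -(fineK fx).
case: (h z) => [r| |] //=; rewrite -?EFinD ?lee_fin => Hr.
  rewrite dotBr (dotC a z) (dotC a xx) in Hr; lra.
by rewrite addeNy leNye.
Qed.

End Conj.

Section Cont.
Variable R : realType.

Lemma continuous_entry p q (i : 'I_p) (j : 'I_q) :
  continuous (fun M : 'M[R]_(p, q) => M i j).
Proof.
move=> u A /nbhs_ballP[e /= e0 eA].
apply/nbhs_ballP; exists e => //= v [_ uv]; apply: eA.
exact: uv.
Qed.

Lemma cvg_dot n (p : 'rV[R]_n) (q_ : nat -> 'rV[R]_n) q :
  q_ @ \oo --> q -> (fun k => dot p (q_ k)) @ \oo --> dot p q.
Proof.
move=> Hq; rewrite /dot; apply: cvg_big => //.
  exact: add_continuous.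
move=> i _; apply: cvgM; first exact: cvg_cst.
exact: (cvg_comp _ _ Hq (@continuous_entry 1 n 0 i q)).
Qed.

End Cont.



Section Seq.
Variable R : realType.
Implicit Types w eps E : nat -> R.

Lemma sq_cvg0 w eps (C : R) : (forall k, w k ^+ 2 <= C * eps k) ->
  eps @ \oo --> 0 -> w @ \oo --> 0.
Proof.
move=> H he; apply/cvgr0Pnorm_lt => e e0.
have hC : (fun k => C * eps k) @ \oo --> (0:R).
  rewrite -(mulr0 C); apply: cvgM => //; exact: cvg_cst.
near=> k.
have : C * eps k < e ^+ 2.
  near: k; exact: (cvgr_lt 0 hC _ (exprn_gt0 2 e0)).
have := H k => h1 h2.
rewrite ltr_norml; apply/andP; split; nra.
Unshelve. all: by end_near.
Qed.

Lemma cvg_diff0 E : (forall k, E k.+1 <= E k) -> (forall k, 0 <= E k) ->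
  (fun k => E k - E k.+1) @ \oo --> 0.
Proof.
move=> Hd H0.
have : cvgn E.
  apply: nonincreasing_is_cvgn; first exact/nonincreasing_seqP.
  by exists 0 => _ [k _ <-].
move=> /cvg_ex [l Hl].
rewrite -(subrr l); apply: cvgB => //.
by rewrite -[X in X @ \oo --> _]/([sequence E k.+1]_k) cvg_shiftS.
Qed.

End Seq.

Unset Implicit Arguments. Set Strict Implicit.


Lemma Breg_halfsq (R : realType) n (a c : 'rV[R]_n) :
  Breg (@halfsq R n) a c = (2^-1 * dot (a - c) (a - c))%:E.
Proof.
have E : edom (@halfsq R n) = setT by apply/seteqP; split => // z _; exact: ltry.
rewrite /Breg E interiorT asboolT // grad_halfsq /halfsq -!EFinB.
congr (_%:E); rewrite !(dotBl, dotBr) (dotC a c); lra.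
Qed.

Lemma Breg_phi (R : realType) m (phi : 'rV[R]_m -> \bar R) a c :
  proper_fun phi -> edom phi a -> interior (edom phi) c ->
  Breg phi a c = (fine (phi a) - fine (phi c) - dot (grad phi c) (a - c))%:E.
Proof.
move=> pp ea ic.
have ec : edom phi c by exact: interior_subset.
rewrite /Breg asboolT //.
by rewrite -(fineK (fin_edom pp ea)) -(fineK (fin_edom pp ec)) -!EFinB !fineK ?fin_edom.
Qed.

Lemma dot_mulmxl (R : realType) n m (xx : 'rV[R]_n) (yy : 'rV[R]_m) (A : 'M[R]_(m, n)) :
  dot (yy *m A) xx = dot (xx *m A^T) yy.
Proof. by rewrite dotC dot_mulmx. Qed.

Lemma Fstar_val (R : realType) n m (f : 'rV[R]_n -> \bar R) (g : 'rV[R]_m -> \bar R)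
  (A : 'M[R]_(m, n)) (b : 'rV[R]_m) vv yy ss a :
  subdiff f ss a -> vv - yy *m A = a -> conj g yy \is a fin_num ->
  Fstar f g A b vv yy = (dot ss a - fine (f ss) + dot b yy + fine (conj g yy))%:E.
Proof.
move=> sd e fg; rewrite /Fstar e (conj_subdiff sd).
have [fs _] := sd.
by rewrite -[f ss](fineK fs) -[conj g yy](fineK fg).
Qed.

Theorem mainTheorem14 (R : realType) (n m : nat)
  (f : 'rV[R]_n -> \bar R) (g : 'rV[R]_m -> \bar R)
  (A : 'M[R]_(m, n)) (b : 'rV[R]_m) (phi : 'rV[R]_m -> \bar R)
  (sigma rho : nat -> R) (sigma0 rho0 : R)
  (s x v : nat -> 'rV[R]_n) (y u : nat -> 'rV[R]_m)
  (xs : 'rV[R]_n) (ys : 'rV[R]_m) :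
  Gamma0 f -> Gamma0 g -> Legendre phi ->
  (exists p : 'rV[R]_n * 'rV[R]_m,
      interior (edom (fun q : 'rV[R]_n * 'rV[R]_m => (halfsq q.1 + phi q.2)%E)) p /\
      exists vu, KKT f g A b p.1 p.2 vu) ->
  0 < sigma0 -> (forall k, sigma0 <= sigma k) ->
  rho0 < 1 -> (forall k, 0 <= rho k <= rho0) ->
  BPALM f g A b (@halfsq R n) phi sigma rho s x v y u ->
  KKT f g A b xs ys (0, 0) -> edom phi ys ->
  (exists M : R, forall k, enorm (y k.+1) <= M) ->
  ((fun k => Fstar f g A b (v k) (y k.+1)) @ \oo --> Fstar f g A b 0 ys) /\
  (forall yinf : 'rV[R]_m,
     (exists phi_ : nat -> nat, (forall k, (phi_ k < phi_ k.+1)%N) /\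
        (fun k => y (phi_ k).+1) @ \oo --> yinf) ->
     forall z : 'rV[R]_m, (Fstar f g A b 0 yinf <= Fstar f g A b 0 z)%E).
Proof.
move=> [fp [_ _]] [gp [_ _]] [[php [_ phc]] [[_ [phd _]] _]] _ s0 Hs r1 Hr.
move=> [x0i [y0i Hk]] [[as_ Has eas] [cs Hcs ecs]] eys _.
rewrite /= in eas ecs.
have xstep : forall k, x k.+1 = x k - sigma k *: v k.
  by move=> k; have [_ [_ [_ [/esym H _]]]] := Hk k; rewrite !grad_halfsq in H.
have yint : forall k, interior (edom phi) (y k) by case=> [//|k]; have [_ [_ [_ [_ []]]]] := Hk k.
set Dx := fun a c : 'rV[R]_n => 2^-1 * dot (a - c) (a - c).
set Dp := fun a c : 'rV[R]_m => fine (phi a) - fine (phi c) - dot (grad phi c) (a - c).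
have Dx_ge0 : forall a c, 0 <= Dx a c by move=> a c; rewrite /Dx mulr_ge0 ?dot_ge0 ?invr_ge0 //.
have Dp_ge0 : forall a c, edom phi a -> interior (edom phi) c -> 0 <= Dp a c.
  move=> a c ea ic; rewrite /Dp subr_ge0 lerBrDl.
  apply: grad_ineq => //; [exact: phd | exact: interior_subset].
have yedom : forall k, edom phi (y k) by move=> k; exact: interior_subset.
set E := fun k => Dx xs (x k) + Dp ys (y k).
set Q := fun k => Dx (s k) (x k) + Dp (y k.+1) (y k).
have Bk : forall k, Dx (s k) (x k.+1) <= rho k * Q k.
  move=> k; have [_ [_ [_ [_ [_ [_ H]]]]]] := Hk k.
  move: H; rewrite !Breg_halfsq !Breg_phi // -EFinD -EFinM lee_fin.
have eas' : as_ = - (ys *m A) by apply/rowP => i; move/rowP: eas => /(_ i); rewrite !mxE; lra.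
have ecs' : cs = xs *m A^T - b by apply/rowP => i; move/rowP: ecs => /(_ i); rewrite !mxE; lra.
have mono : forall k, 0 <= dot (v k) (s k - xs) + dot (u k) (y k.+1 - ys).
  move=> k; have [_ [[[ak Hak ev] [ck Hck eu]] _]] := Hk k; rewrite /= in ev eu.
  have h1 := subdiff_le Hak Has.1.
  have h2 := subdiff_le Has Hak.1.
  have h3 := subdiff_le Hck Hcs.1.
  have h4 := subdiff_le Hcs Hck.1.
  rewrite eas' ecs' in h2 h4; rewrite ev eu.
  move: h1 h2 h3 h4; rewrite !(dotDl, dotDr, dotBl, dotBr, dotNl, dotNr, (@dot_mulmxl R n m _ _ A)).
  lra.
have ident : forall k, sigma k * (dot (v k) (s k - xs) + dot (u k) (y k.+1 - ys))
   = E k - E k.+1 - Q k + Dx (s k) (x k.+1).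
  move=> k; have [_ [_ [_ [_ [_ [gy _]]]]]] := Hk k.
  have ev : sigma k *: v k = x k - x k.+1.
    by rewrite xstep; apply/rowP => i; rewrite !mxE; lra.
  have eu : sigma k *: u k = grad phi (y k) - grad phi (y k.+1).
    by rewrite gy; apply/rowP => i; rewrite !mxE; lra.
  rewrite mulrDr -!dotZl ev eu /E /Q /Dx /Dp.
  rewrite !(dotDl, dotDr, dotBl, dotBr, dotNl, dotNr).
  rewrite (dotC xs (x k)) (dotC xs (x k.+1)) (dotC (s k) (x k)) (dotC (s k) (x k.+1)).
  lra.
have Qge0 : forall k, 0 <= Q k.
  by move=> k; rewrite /Q addr_ge0 ?Dx_ge0 ?Dp_ge0.
have Ege0 : forall k, 0 <= E k.
  by move=> k; rewrite /E addr_ge0 ?Dx_ge0 ?Dp_ge0.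
set dlt := fun k => E k - E k.+1.
have r0 : 0 < 1 - rho0 by lra.
have Qle : forall k, Q k <= dlt k / (1 - rho0).
  move=> k; rewrite ler_pdivlMr // /dlt.
  have := mono k; have := ident k; have := Bk k; have := Hr k; have := Hs k; have := Qge0 k.
  move=> q0 sk rk bk id mk.
  have : 0 <= sigma k * (dot (v k) (s k - xs) + dot (u k) (y k.+1 - ys)).
    by apply: mulr_ge0 => //; lra.
  rewrite id => h; nra.
have dlt0 : forall k, 0 <= dlt k.
  move=> k; have := Qle k; have := Qge0 k => q0 h.
  have : 0 <= dlt k / (1 - rho0) by lra.
  by rewrite pmulr_lge0 // invr_gt0.
have dltc : dlt @ \oo --> 0.
  apply: cvg_diff0 => // k; have := dlt0 k; rewrite /dlt; lra.
have Dxs1 : forall k, Dx (s k) (x k.+1) <= Q k.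
  move=> k; have := Bk k; have := Hr k; have := Qge0 k => q0 rk bk; nra.
have Dxs0 : forall k, Dx (s k) (x k) <= Q k.
  move=> k; have := Dp_ge0 _ _ (yedom k.+1) (yint k); rewrite /Q; lra.
set Cv := 8 / ((1 - rho0) * sigma0 ^+ 2).
have vbound : forall k, dot (v k) (v k) <= Cv * dlt k.
  move=> k.
  have ev : sigma k *: v k = x k - x k.+1.
    by rewrite xstep; apply/rowP => i; rewrite !mxE; lra.
  have h1 : sigma k ^+ 2 * dot (v k) (v k) <= 4 * (Dx (s k) (x k) + Dx (s k) (x k.+1)).
    rewrite expr2 -mulrA -dotZr -dotZl ev /Dx.
    have := dot_ge0 (x k - s k - (s k - x k.+1)).
    rewrite !(dotDl, dotDr, dotBl, dotBr, dotNl, dotNr).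
    rewrite (dotC (s k) (x k)) (dotC (s k) (x k.+1)) (dotC (x k.+1) (x k)).
    lra.
  have h2 : 4 * (Dx (s k) (x k) + Dx (s k) (x k.+1)) <= 8 * dlt k / (1 - rho0).
    have := Dxs1 k; have := Dxs0 k; have := Qle k.
    rewrite -mulrA; lra.
  have h3 : sigma0 ^+ 2 <= sigma k ^+ 2.
    by rewrite ler_pXn2r ?nnegrE ?(ltW s0) //; have := Hs k; lra.
  have vv0 := dot_ge0 (v k).
  have h4 : sigma0 ^+ 2 * dot (v k) (v k) <= 8 * dlt k / (1 - rho0).
    apply: le_trans (le_trans h1 h2); exact: ler_wpM2r.
  have -> : Cv * dlt k = (8 * dlt k / (1 - rho0)) / sigma0 ^+ 2.
    by rewrite /Cv; field; rewrite ?gt_eqF ?exprn_gt0 //; apply/andP; split; rewrite gt_eqF ?exprn_gt0.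
  by rewrite ler_pdivlMr ?exprn_gt0 // mulrC.
have wv : forall p : 'rV[R]_n, (fun k => dot p (v k)) @ \oo --> 0.
  move=> p; apply: (@sq_cvg0 _ _ dlt (dot p p * Cv)) => // k.
  apply: le_trans (dot_CS p (v k)) _; rewrite -mulrA; apply: ler_wpM2l => //.
  exact: dot_ge0.
set L := dot xs as_ - fine (f xs) + dot b ys + fine (conj g ys).
have FL : Fstar f g A b 0 ys = L%:E.
  apply: Fstar_val => //; first by rewrite sub0r eas'.
  by case: Hcs.
set K := sigma0^-1.
have Fb : forall k, Fstar f g A b (v k) (y k.+1) = (fine (Fstar f g A b (v k) (y k.+1)))%:E /\
    dot xs (v k) <= fine (Fstar f g A b (v k) (y k.+1)) - L <= dot xs (v k) + K * dlt k.
  move=> k; have [_ [[[ak Hak ev] [ck Hck eu]] _]] := Hk k; rewrite /= in ev eu.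
  have FV : Fstar f g A b (v k) (y k.+1) = (dot (s k) ak - fine (f (s k)) + dot b (y k.+1) + fine (conj g (y k.+1)))%:E.
    apply: Fstar_val => //; first by rewrite ev addrK.
    by case: Hck.
  rewrite FV /=; split => //.
  have h1 := subdiff_le Hak Has.1.
  have h2 := subdiff_le Has Hak.1.
  have h3 := subdiff_le Hck Hcs.1.
  have h4 := subdiff_le Hcs Hck.1.
  have up1 : dot (s k) ak - fine (f (s k)) + dot b (y k.+1) + fine (conj g (y k.+1)) - L <=
      dot xs (v k) + (dot (v k) (s k - xs) + dot (u k) (y k.+1 - ys)).
    move: h2 h3; rewrite /L eas' eu ev.
    rewrite !(dotDl, dotDr, dotBl, dotBr, dotNl, dotNr, (@dot_mulmxl R n m _ _ A), (@dot_mulmx R n m _ _ A)).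
    rewrite (dotC (s k) ak) (dotC xs ak); lra.
  have hM : dot (v k) (s k - xs) + dot (u k) (y k.+1 - ys) <= K * dlt k.
    have := ident k; have := mono k; have := Dxs1 k; have := Hs k.
    set M := dot (v k) (s k - xs) + dot (u k) (y k.+1 - ys) => sk dx m0 id.
    rewrite /K mulrC ler_pdivlMr //.
    have := ler_wpM2l m0 sk; rewrite /dlt /= in id *; lra.
  apply/andP; split; last by lra.
  move: h1 h4; rewrite /L eas' ecs' ev.
  rewrite !(dotDl, dotDr, dotBl, dotBr, dotNl, dotNr, (@dot_mulmxl R n m _ _ A), (@dot_mulmx R n m _ _ A)).
  rewrite (dotC (s k) ak) (dotC xs ak); lra.
have Fc : (fun k => fine (Fstar f g A b (v k) (y k.+1))) @ \oo --> L.
  have c1 : (fun k => L + dot xs (v k)) @ \oo --> L + 0.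
    by apply: cvgD; [exact: cvg_cst | exact: wv].
  have c2 : (fun k => L + dot xs (v k) + K * dlt k) @ \oo --> L + 0 + K * 0.
    apply: cvgD => //; apply: cvgM => //; exact: cvg_cst.
  rewrite addr0 in c1; rewrite mulr0 !addr0 in c2.
  apply: (squeeze_cvgr _ c1 c2); apply: nearW => k.
  have [_ /andP[h1 h2]] := Fb k; apply/andP; split; lra.
split.
  rewrite FL; apply: cvg_EFin => //; apply: nearW => k.
  by rewrite (Fb k).1.
move=> yinf [ph [phi_inc phc']] z.
have phk : forall k, (k <= ph k)%N.
  elim=> [|k IH] //; exact: leq_ltn_trans IH (phi_inc k).
have phoo : ph @ \oo --> \oo.
  apply/cvgnyPge => N; near=> k; apply: leq_trans (phk k); near: k.
  exact: nbhs_infty_ge.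
have stepa : (L%:E <= Fstar f g A b 0 z)%E.
  rewrite /Fstar.
  have h1 := conj_ge f (0 - z *m A) xs.
  have [fcs h2] := Hcs; have h2z := h2 z.
  have fxs : f xs \is a fin_num by case: Has.
  apply: le_trans (leeD (leeD h1 (lexx _)) h2z).
  rewrite -(fineK fxs) -(fineK fcs) -!EFinB -!EFinD lee_fin /L eas' ecs'.
  rewrite !(dotDl, dotDr, dotBl, dotBr, dotNl, dotNr, dot0r, (@dot_mulmx R n m _ _ A)).
  lra.
have claim : forall xx w, f xx \is a fin_num -> g w \is a fin_num ->
    dot xx (0 - yinf *m A) - fine (f xx) + dot b yinf + (dot w yinf - fine (g w)) <= L.
  move=> xx w ffx fgw.
  have le_k : forall j, dot xx (v j) - dot (xx *m A^T) (y j.+1) - fine (f xx) + dot b (y j.+1)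
      + (dot w (y j.+1) - fine (g w)) <= fine (Fstar f g A b (v j) (y j.+1)).
    move=> j; have [FE _] := Fb j.
    have H := leeD (leeD (conj_ge f (v j - y j.+1 *m A) xx) (lexx (dot b (y j.+1))%:E)) (conj_ge g (y j.+1) w).
    move: H; rewrite -[X in (_ <= X)%E]/(Fstar f g A b (v j) (y j.+1)) FE.
    rewrite -(fineK ffx) -(fineK fgw) -!EFinB -!EFinD lee_fin.
    by rewrite dotBr (@dot_mulmx R n m _ _ A).
  set T := 0 - dot (xx *m A^T) yinf - fine (f xx) + dot b yinf + (dot w yinf - fine (g w)).
  have cT : (fun k => dot xx (v (ph k)) - dot (xx *m A^T) (y (ph k).+1) - fine (f xx) + dot b (y (ph k).+1)
      + (dot w (y (ph k).+1) - fine (g w))) @ \oo --> T.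
    apply: cvgD; [apply: cvgD; [apply: cvgB; [apply: cvgB|]|]|apply: cvgB].
    - exact: (cvg_comp _ _ phoo (wv xx)).
    - exact: cvg_dot.
    - exact: cvg_cst.
    - exact: cvg_dot.
    - exact: cvg_dot.
    - exact: cvg_cst.
  have cF : (fun k => fine (Fstar f g A b (v (ph k)) (y (ph k).+1))) @ \oo --> L.
    exact: (cvg_comp _ _ phoo Fc).
  have cD := cvgB cF cT; have {}cD := cD eventually_filter.
  have : 0 <= L - T.
    rewrite -(cvg_lim _ cD) //; apply: limr_ge; first by apply/cvg_ex; exists (L - T).
    apply: nearW => k /=; rewrite subr_ge0; exact: le_k.
  rewrite /T dotBr dot0r dot_mulmx; lra.
apply: le_trans stepa; rewrite /Fstar.
set S1 := conj f (0 - yinf *m A); set c := dot b yinf.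
have S1le : forall w, g w \is a fin_num -> (S1 <= (L - c - (dot w yinf - fine (g w)))%:E)%E.
  move=> w fgw; apply: ge_ereal_sup => _ [xx _ <-].
  have := fp.1 xx; have := claim xx w.
  case: (f xx) => [r| |] //= h _.
    by rewrite -EFinB lee_fin; have := h isT fgw; rewrite /c; lra.
  by rewrite addeNy leNye.
have [x0 fx0] := fp.2; have [w0 fw0] := gp.2.
have S1fin : S1 \is a fin_num.
  apply: fin_real; apply/andP; split.
    apply: lt_le_trans (conj_ge f (0 - yinf *m A) x0).
    by rewrite -(fineK fx0) -EFinB ltNyr.
  exact: le_lt_trans (S1le w0 fw0) (ltry _).
have S2le : (conj g yinf <= (L - c - fine S1)%:E)%E.
  apply: ge_ereal_sup => _ [w _ <-].
  have := gp.1 w; have := S1le w.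
  case: (g w) => [r| |] //= h _.
    have := h isT; rewrite -(fineK S1fin) lee_fin => h'.
    by rewrite -EFinB lee_fin; lra.
  by rewrite addeNy leNye.
rewrite -(fineK S1fin); apply: le_trans (leeD (lexx _) S2le) _.
by rewrite -!EFinD lee_fin; lra.
Unshelve. all: by end_near.
Qed.
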